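(* For every $\mathcal{H}\subseteq\{0,1\}^{\mathcal{X}}$: (i) $\operatorname{AL}_{w_1}(\mathcal{H})\ge\operatorname{AL}_{w_2}(\mathcal{H})$ for all $w_1<w_2$; (ii) $\operatorname{AL}_w(\mathcal{H})\ge\min\{w,\operatorname{L}(\mathcal{H})\}$ for all $w\in\mathbb{N}$; (iii) if $\operatorname{L}(\mathcal{H})<\infty$ then $\operatorname{AL}_w(\mathcal{H})=\operatorname{L}(\mathcal{H})$ for all $w\ge\operatorname{L}(\mathcal{H})+1$; (iv) if $\operatorname{L}(\mathcal{H})<\infty$ then $\operatorname{W}(\mathcal{H})\le\operatorname{L}(\mathcal{H})+1$; (v) $\operatorname{W}(\mathcal{H})<\infty$ if and only if $\operatorname{L}(\mathcal{H})<\infty$.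
   Context: AL tree of width $w\in\mathbb{N}=\{1,2,\dots\}$ and depth $d$: a binary string $u$ is an internal node if $|u|<d$ and $u$ has fewer than $w$ ones; the tree assigns $x_u\in\mathcal{X}$ to each internal node. A path is a binary string $\sigma$ whose proper prefixes are all internal nodes but which is not itself one (so $|\sigma|=d$ or $\sigma$ has exactly $w$ ones). The tree is shattered by $\mathcal{H}$ if for every path $\sigma$ some $h\in\mathcal{H}$ satisfies $h(x_{(\sigma_1,\dots,\sigma_{i-1})})=\sigma_i$ for all $i\le|\sigma|$. When $w\ge d$ this is a complete binary (Littlestone) tree of depth $d$. $\operatorname{L}(\mathcal{H})$ (Littlestone dimension) is the largest $d$ such that a complete binary tree of depth $d$ is shattered ($\infty$ if unbounded). $\operatorname{AL}_w(\mathcal{H})$ is the largest $d$ such that an AL tree of width $w$ and depth $d$ is shattered ($\infty$ if unbounded, $0$ if none). The Effective width $\operatorname{W}(\mathcal{H})$ is the smallest $w\in\mathbb{N}$ with $\operatorname{AL}_w(\mathcal{H})<\infty$, and $\infty$ if none exists. *)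

(* Defs.v *)
From mathcomp Require Import all_boot.
From Stdlib Require Import Classical ClassicalEpsilon Wf_nat.

Set Implicit Arguments.
Unset Strict Implicit.
Unset Printing Implicit Defensive.

(* Extended naturals: [Some n] = n, [None] = infinity. *)
Definition enat := option nat.

Definition ele (a b : enat) : Prop :=
  match a, b with
  | _, None => True
  | None, Some _ => False
  | Some m, Some n => (m <= n)%N
  end.

Definition emin (a b : enat) : enat :=
  match a, b with
  | None, _ => b
  | _, None => a
  | Some m, Some n => Some (minn m n)
  end.

Definition AL_internal (w d : nat) (u : seq bool) : bool :=
  (size u < d) && (count id u < w).

Definition AL_path (w d : nat) (s : seq bool) : Prop :=
  (forall i, i < size s -> AL_internal w d (take i s)) /\ ~~ AL_internal w d s.

Definition AL_tree (X : Type) (w d : nat) := forall u : seq bool, AL_internal w d u -> X.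

Definition AL_shattered (X : Type) (H : (X -> bool) -> Prop) (w d : nat)
    (T : AL_tree X w d) : Prop :=
  forall s, AL_path w d s ->
    exists h, H h /\
      forall i (Hi : AL_internal w d (take i s)), i < size s ->
        h (T (take i s) Hi) = nth false s i.

Definition L_tree (X : Type) (d : nat) := forall u : seq bool, size u < d -> X.

Definition L_shattered (X : Type) (H : (X -> bool) -> Prop) (d : nat)
    (T : L_tree X d) : Prop :=
  forall s, size s = d ->
    exists h, H h /\
      forall i (Hi : size (take i s) < d), i < size s ->
        h (T (take i s) Hi) = nth false s i.

Lemma largest_exists (P : nat -> Prop) :
  (exists B, forall d, P d -> d <= B) ->
  exists n, (P n \/ (n = 0 /\ forall d, ~ P d)) /\ (forall d, P d -> d <= n).
Proof.
move=> [B]; elim: B => [|B IH] hB.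
  exists 0; split; last by move=> d /hB.
  case: (classic (P 0)) => [p0|np0]; [by left | right; split=> // d pd].
  by have := hB d pd; rewrite leqn0 => /eqP Ed; apply: np0; rewrite -Ed.
case: (classic (P B.+1)) => [pB|npB]; first by exists B.+1; split; [left|].
apply: IH => d pd; have := hB d pd; rewrite leq_eqVlt => /orP[/eqP Ed|] //.
by exfalso; apply: npB; rewrite -Ed.
Qed.

(* largest d with P d; infinity if unbounded; 0 if there is none *)
Definition sup_dim (P : nat -> Prop) : enat :=
  match excluded_middle_informative (exists B, forall d, P d -> d <= B) with
  | left hb => Some (proj1_sig (constructive_indefinite_description _ (largest_exists hb)))
  | right _ => None
  end.

Lemma least_exists (P : nat -> Prop) :
  (exists n, P n) -> exists n, P n /\ (forall m, P m -> n <= m).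
Proof.
move=> hex.
have [n [[Pn hn] _]] :=
  dec_inh_nat_subset_has_unique_least_element P (fun n => classic (P n)) hex.
by exists n; split=> // m /hn /leP.
Qed.

Definition inf_dim (P : nat -> Prop) : enat :=
  match excluded_middle_informative (exists n, P n) with
  | left he => Some (proj1_sig (constructive_indefinite_description _ (least_exists he)))
  | right _ => None
  end.

Definition ALdim (X : Type) (H : (X -> bool) -> Prop) (w : nat) : enat :=
  sup_dim (fun d => exists T : AL_tree X w d, AL_shattered H T).

Definition Ldim (X : Type) (H : (X -> bool) -> Prop) : enat :=
  sup_dim (fun d => exists T : L_tree X d, L_shattered H T).

Definition Wdim (X : Type) (H : (X -> bool) -> Prop) : enat :=
  inf_dim (fun w => 0 < w /\ ALdim H w <> None).

(* Main.v *)
Require Import Defs.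
From mathcomp Require Import all_boot.
From mathcomp Require Import zify.
From Stdlib Require Import Classical ClassicalEpsilon.

Set Implicit Arguments.
Unset Strict Implicit.

Definition gpath (I : seq bool -> bool) (s : seq bool) : Prop :=
  (forall i, i < size s -> I (take i s)) /\ ~~ I s.

Definition gshat (X : Type) (H : (X -> bool) -> Prop) (I : seq bool -> bool)
  (T : forall u, I u -> X) : Prop :=
  forall s, gpath I s -> exists h, H h /\
    forall i (Hi : I (take i s)), i < size s -> h (T (take i s) Hi) = nth false s i.

Lemma Teq (X : Type) (I : seq bool -> bool) (T : forall u, I u -> X) u v
  (e : u = v) (Hu : I u) (Hv : I v) : T u Hu = T v Hv.
Proof. subst v; congr (T u _); apply: bool_irrelevance. Qed.

Lemma restrict (X : Type) (H : (X -> bool) -> Prop) (I1 I2 : seq bool -> bool)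
  (sub : forall u, I1 u -> I2 u)
  (ext : forall s, gpath I1 s -> exists s', gpath I2 s' /\ s = take (size s) s')
  (T2 : forall u, I2 u -> X) :
  gshat H T2 -> gshat H (fun u Hu => T2 u (sub u Hu)).
Proof.
move=> sh s ps; have [s' [ps' es]] := ext s ps.
have [h [Hh hh]] := sh s' ps'; exists h; split=> // i Hi lt.
have les : size s <= size s'.
  by have := congr1 size es; rewrite size_take; case: ltnP => [l1 _|l1 ->] //; apply: ltnW.
have lt' : i < size s' by lia.
have e : take i s = take i s'.
  by rewrite {1}es take_takel // ltnW.
rewrite (Teq T2 e _ (ps'.1 i lt')) hh //.
have -> : nth false s i = nth false (take (size s) s') i by rewrite -es.
by rewrite nth_take.
Qed.

Lemma count_take_le (s : seq bool) i : count id (take i s) <= count id s.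
Proof. by rewrite -{2}(cat_take_drop i s) count_cat leq_addr. Qed.

Lemma AL_path_size w d s : gpath (AL_internal w d) s -> size s <= d.
Proof.
move=> [hp _]; rewrite leqNgt; apply/negP => lt.
by have := hp d lt; rewrite /AL_internal size_takel ?ltnn // ltnW.
Qed.

Lemma ext_mono w1 w2 d1 d2 : w1 <= w2 -> d1 <= d2 ->
  forall s, gpath (AL_internal w1 d1) s ->
    exists s', gpath (AL_internal w2 d2) s' /\ s = take (size s) s'.
Proof.
move=> lw ld s ps; have ls := AL_path_size ps.
case: (ltnP (count id s) w2) => cw.
- exists (s ++ nseq (d2 - size s) false); split; last by rewrite take_size_cat.
  have cs : count id (s ++ nseq (d2 - size s) false) = count id s.
    by rewrite count_cat count_nseq /= mul0n addn0.
  have ss : size (s ++ nseq (d2 - size s) false) = d2.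
    by rewrite size_cat size_nseq; lia.
  split; last by rewrite /AL_internal ss ltnn.
  move=> i; rewrite ss => lt; rewrite /AL_internal size_takel; last by rewrite ss ltnW.
  rewrite lt /=.
  by apply: leq_ltn_trans (count_take_le _ _) _; rewrite cs.
- exists s; rewrite take_size; split=> //; split.
    move=> i lt; have := ps.1 i lt; rewrite /AL_internal => /andP[a b].
    apply/andP; split; [lia|lia].
  by rewrite /AL_internal; apply/negP => /andP[_ c]; lia.
Qed.

Lemma ext_eq (I1 I2 : seq bool -> bool) : I1 =1 I2 ->
  forall s, gpath I1 s -> exists s', gpath I2 s' /\ s = take (size s) s'.
Proof.
move=> e s [p1 p2]; exists s; rewrite take_size; split=> //; split.
  by move=> i lt; rewrite -e; apply: p1.
by rewrite -e.
Qed.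

Definition PAL (X : Type) (H : (X -> bool) -> Prop) w d :=
  exists T : AL_tree X w d, AL_shattered H T.
Definition PL (X : Type) (H : (X -> bool) -> Prop) d :=
  exists T : L_tree X d, L_shattered H T.

Lemma PAL_mono X (H : (X -> bool) -> Prop) w1 w2 d1 d2 : w1 <= w2 -> d1 <= d2 ->
  PAL H w2 d2 -> PAL H w1 d1.
Proof.
move=> lw ld [T sh].
have sub : forall u, AL_internal w1 d1 u -> AL_internal w2 d2 u.
  by move=> u /andP[a b]; apply/andP; split; lia.
exists (fun u Hu => T u (sub u Hu)).
exact: (restrict sub (ext_mono lw ld) sh).
Qed.

Lemma PAL_eq X (H : (X -> bool) -> Prop) w1 w2 d : d <= w1 -> d <= w2 ->
  PAL H w2 d -> PAL H w1 d.
Proof.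
move=> l1 l2 [T sh].
have e : AL_internal w1 d =1 AL_internal w2 d.
  move=> u; rewrite /AL_internal; case: ltnP => //= lt.
  have c : count id u < d := leq_ltn_trans (count_size id u) lt.
  by rewrite (leq_trans c l1) (leq_trans c l2).
have sub : forall u, AL_internal w1 d u -> AL_internal w2 d u by move=> u; rewrite e.
exists (fun u Hu => T u (sub u Hu)).
exact: (restrict sub (ext_eq e) sh).
Qed.

Lemma Lpath d s : gpath (fun u => size u < d) s <-> size s = d.
Proof.
split.
  move=> [hp hn]; apply/eqP; rewrite eqn_leq [d <= _]leqNgt hn andbT leqNgt; apply/negP=> lt.
  by have := hp d lt; rewrite size_takel ?ltnn // ltnW.
move=> <-; split; last by rewrite ltnn.
by move=> i lt; rewrite size_takel // ltnW.
Qed.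

Lemma PL_PAL X (H : (X -> bool) -> Prop) d : PL H d <-> PAL H d d.
Proof.
have e : (fun u : seq bool => size u < d) =1 AL_internal d d.
  move=> u; rewrite /AL_internal; case: ltnP => //= lt.
  by rewrite (leq_ltn_trans (count_size id u) lt).
split.
- move=> [T sh].
  have sub : forall u, AL_internal d d u -> size u < d by move=> u; rewrite e.
  exists (fun u Hu => T u (sub u Hu)).
  apply: (restrict sub (ext_eq (fsym e))).
  by move=> s /Lpath; apply: sh.
- move=> [T sh].
  have sub : forall u, size u < d -> AL_internal d d u by move=> u; rewrite e.
  exists (fun u Hu => T u (sub u Hu)).
  move=> s ss; apply: (restrict sub (ext_eq e) sh).
  by apply/Lpath.
Qed.

Lemma sup_Some (P : nat -> Prop) n : sup_dim P = Some n ->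
  (P n \/ n = 0) /\ (forall d, P d -> d <= n).
Proof.
rewrite /sup_dim; case: excluded_middle_informative => // hb.
case: constructive_indefinite_description => m /= [h1 h2] [<-].
by split=> //; case: h1 => [p|[-> _]]; [left|right].
Qed.

Lemma sup_None (P : nat -> Prop) : sup_dim P = None ->
  forall B, exists d, P d /\ B < d.
Proof.
rewrite /sup_dim; case: excluded_middle_informative => // nb _ B.
apply: NNPP => hn; apply: nb; exists B => d Pd; rewrite leqNgt; apply/negP => lt.
by apply: hn; exists d.
Qed.

Lemma sup_eq (P : nat -> Prop) n : (forall d, P d -> d <= n) -> (n = 0 \/ P n) ->
  sup_dim P = Some n.
Proof.
move=> hb hn; case E: (sup_dim P) => [m|].
  have [[pm|->] hm] := sup_Some E; congr Some; apply/eqP; rewrite eqn_leq.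
  - by rewrite hb //; case: hn => [->|/hm] //.
  - by case: hn => [->|/hm] //; rewrite leqn0 => /eqP ->.
have [d [pd lt]] := sup_None E n.
by have := hb d pd; rewrite leqNgt lt.
Qed.

Lemma sup_le (P1 P2 : nat -> Prop) : (forall d, P2 d -> P1 d) ->
  ele (sup_dim P2) (sup_dim P1).
Proof.
move=> h; case E1: (sup_dim P1) => [n1|]; last by case: (sup_dim P2).
have [_ b1] := sup_Some E1.
case E2: (sup_dim P2) => [n2|] /=.
  by have [[p|->] _] := sup_Some E2; [apply: b1; apply: h|].
have [d [pd lt]] := sup_None E2 n1.
by have := b1 d (h d pd); rewrite leqNgt lt.
Qed.

Lemma inf_le (P : nat -> Prop) n : P n -> ele (inf_dim P) (Some n).
Proof.
move=> pn; rewrite /inf_dim; case: excluded_middle_informative => [he|nh]; last first.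
  by exfalso; apply: nh; exists n.
by case: constructive_indefinite_description => m /= [_ h]; apply: h.
Qed.

Lemma inf_ex (P : nat -> Prop) : inf_dim P <> None -> exists n, P n.
Proof. by rewrite /inf_dim; case: excluded_middle_informative. Qed.

Theorem lemma1 (X : Type) (H : (X -> bool) -> Prop) :
  (* (i) *)
  (forall w1 w2 : nat, 0 < w1 -> w1 < w2 -> ele (ALdim H w2) (ALdim H w1)) /\
  (* (ii) *)
  (forall w : nat, 0 < w -> ele (emin (Some w) (Ldim H)) (ALdim H w)) /\
  (* (iii) *)
  (forall L : nat, Ldim H = Some L ->
     forall w : nat, L + 1 <= w -> ALdim H w = Some L) /\
  (* (iv) *)
  (forall L : nat, Ldim H = Some L -> ele (Wdim H) (Some (L + 1))) /\
  (* (v) *)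
  (Wdim H <> None <-> Ldim H <> None).
Proof.
have QP : forall w d, PL H d -> PAL H w d.
  move=> w d /PL_PAL q; case: (leqP d w) => l.
    by apply: (PAL_eq (w2 := d)) => //.
  by apply: (PAL_mono (w2 := d) (d2 := d)) => //; apply: ltnW.
have PQ : forall w d, d <= w -> PAL H w d -> PL H d.
  by move=> w d l p; apply/PL_PAL; apply: (PAL_eq (w2 := w)).
have iii : forall L : nat, Ldim H = Some L ->
     forall w : nat, L + 1 <= w -> ALdim H w = Some L.
  move=> L EL w lw; have [hL bL] := sup_Some EL.
  apply: sup_eq.
    move=> d pd; case: (leqP d w) => l.
      by apply: bL; apply: (PQ w).
    have : PAL H w w by apply: (PAL_mono (w2 := w) (d2 := d)) => //; apply: ltnW.
    move=> /(PQ w w (leqnn w)) /bL; lia.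
  by case: hL => [q|->]; [right; apply: QP|left].
have iv : forall L : nat, Ldim H = Some L -> ele (Wdim H) (Some (L + 1)).
  move=> L EL; apply: inf_le; split; first by rewrite addn1.
  by rewrite (iii L EL (L + 1) (leqnn _)).
split.
  move=> w1 w2 _ lt; apply: sup_le => d.
  by apply: (PAL_mono (w2 := w2) (d2 := d)) => //; apply: ltnW.
split.
  move=> w _; case EA: (ALdim H w) => [a|]; last by case: (emin _ _).
  have [_ bA] := sup_Some EA.
  case EL: (Ldim H) => [L|] /=.
    have [[q|->] _] := sup_Some EL; last by rewrite minn0.
    by apply: leq_trans (geq_minr _ _) (bA _ (QP w L q)).
  have [d [q lt]] := sup_None EL w.
  by apply: leq_trans (ltnW lt) (bA _ (QP w d q)).
split => //; split => //.
split.
  move=> /inf_ex [w [_ hw]] EL; case EA: (ALdim H w) hw => [a|] // _.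
  have [_ bA] := sup_Some EA.
  have [d [q lt]] := sup_None EL a.
  by have := bA _ (QP w d q); rewrite leqNgt lt.
by case EL: (Ldim H) => [L|] // _; have := iv L EL; case: (Wdim H).
Qed.
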